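(* Let $f\colon\mathbb{R}\to\mathbb{R}$ be cliquish. Then $f$ is a Świątkowski function if and only if $f$ satisfies the condition $S(\mathbb{R},A,0)$ for every residual set $A\subset\mathbb{R}$.
   Context: $\mathrm{C}(f)$ denotes the set of continuity points of $f$. $f$ is cliquish if for all $a<b$ and every $\varepsilon>0$ there is a nondegenerate interval $I\subset(a,b)$ with $\operatorname{diam} f[I]<\varepsilon$. $f$ is a Świątkowski function if for all $a<b$ with $f(a)\neq f(b)$ there is $x\in(a,b)\cap\mathrm{C}(f)$ with $f(x)$ strictly between $f(a)$ and $f(b)$. For $a,b\in\mathbb{R}$, $I(a,b)$ denotes the open interval with end-points $a,b$. For $A\subset\mathbb{R}$, an interval $J$ and $\varepsilon\ge0$, $f$ satisfies $S(J,A,\varepsilon)$ if for all $a,b\in J$ with $f(a)<f(b)$ there exists $x\in A\cap I(a,b)$ with $f(x)\in(f(a)-\varepsilon,f(b)+\varepsilon)$. A set is residual if its complement is meager. *)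

(* Defs.v *)
From Stdlib Require Import Reals.
Open Scope R_scope.

Definition cliquish (f : R -> R) : Prop :=
  forall a b : R, a < b -> forall eps : R, 0 < eps ->
    exists c d : R, a <= c /\ c < d /\ d <= b /\
      exists r : R, r < eps /\
        forall x y : R, c < x < d -> c < y < d -> Rabs (f x - f y) <= r.

Definition swiatkowski (f : R -> R) : Prop :=
  forall a b : R, a < b -> f a <> f b ->
    exists x : R, a < x < b /\ continuity_pt f x /\
      Rmin (f a) (f b) < f x < Rmax (f a) (f b).

Definition Iab (a b x : R) : Prop := Rmin a b < x < Rmax a b.

Definition S_cond (f : R -> R) (J A : R -> Prop) (eps : R) : Prop :=
  forall a b : R, J a -> J b -> f a < f b ->
    exists x : R, A x /\ Iab a b x /\ f a - eps < f x < f b + eps.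

Definition closure (A : R -> Prop) (x : R) : Prop :=
  forall e : R, 0 < e -> exists y : R, A y /\ Rabs (y - x) < e.

Definition interior (B : R -> Prop) (x : R) : Prop :=
  exists e : R, 0 < e /\ forall y : R, Rabs (y - x) < e -> B y.

Definition nowhere_dense (A : R -> Prop) : Prop :=
  forall x : R, ~ interior (closure A) x.

Definition meager (A : R -> Prop) : Prop :=
  exists N : nat -> R -> Prop, (forall n, nowhere_dense (N n)) /\
    forall x : R, A x -> exists n : nat, N n x.

Definition residual (A : R -> Prop) : Prop := meager (fun x => ~ A x).

(* Main.v *)
Require Import Defs.
From Stdlib Require Import Reals.
From Stdlib Require Import Lra Lia ClassicalEpsilon Classical.
Open Scope R_scope.

Lemma abs_lt (t k : R) : Rabs t < k -> - k < t < k.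
Proof. intro H; destruct (Rabs_def2 _ _ H); split; lra. Qed.

Lemma abs_lt' (t k : R) : - k < t < k -> Rabs t < k.
Proof. intros [H1 H2]; apply Rabs_def1; lra. Qed.

Lemma nd_step (N : R -> Prop) (a b : R) : nowhere_dense N -> a < b ->
  exists a' b', a <= a' /\ a' < b' /\ b' <= b /\ forall z, a' <= z <= b' -> ~ N z.
Proof.
  intros HN Hab.
  set (x := (a+b)/2). set (e := (b-a)/2).
  assert (He : 0 < e) by (unfold e; lra).
  pose proof (HN x) as H.
  assert (exists y, Rabs (y - x) < e /\ ~ closure N y) as [y [Hy Hc]].
  { apply NNPP; intro Hn. apply H. exists e; split; [exact He|].
    intros y Hy. apply NNPP; intro Hc. apply Hn. exists y; auto. }
  assert (exists e', 0 < e' /\ forall z, Rabs (z - y) < e' -> ~ N z) as [e' [He' Hz]].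
  { apply NNPP; intro Hn. apply Hc. intros e0 He0. apply NNPP; intro Hn2.
    apply Hn. exists e0; split; [exact He0|]. intros z Hz HNz. apply Hn2. exists z; auto. }
  apply abs_lt in Hy.
  set (r := Rmin e' (e - Rabs (y - x)) / 2).
  assert (Hr1 : r <= e' / 2) by (unfold r; pose proof (Rmin_l e' (e - Rabs (y - x))); lra).
  assert (Hr2 : r <= (e - Rabs (y - x)) / 2) by (unfold r; pose proof (Rmin_r e' (e - Rabs (y - x))); lra).
  assert (Hr0 : 0 < r).
  { unfold r. apply Rmin_case; [lra|]. pose proof (Rabs_def1 (y - x) e); lra. }
  assert (Hyx : y - x <= Rabs (y - x) /\ x - y <= Rabs (y - x)).
  { split; [apply RRle_abs|]. rewrite <- Rabs_Ropp. replace (-(y-x)) with (x-y) by ring. apply RRle_abs. }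
  exists (y - r), (y + r). unfold x, e in *. repeat split; try lra.
  intros z Hzz. apply Hz. apply abs_lt'. lra.
Qed.

Lemma baire (A : R -> Prop) : residual A ->
  forall x d, 0 < d -> exists y, A y /\ Rabs (y - x) < d.
Proof.
  intros [N [HN Hcov]] x d Hd.
  assert (Hg : forall (k : nat) (p : R * R), exists q : R * R,
    fst p < snd p -> fst p <= fst q /\ fst q < snd q /\ snd q <= snd p /\
      forall z, fst q <= z <= snd q -> ~ N k z).
  { intros k [a b]. simpl. destruct (Rlt_or_le a b) as [Hab|Hab].
    - destruct (nd_step (N k) a b (HN k) Hab) as [a' [b' H]]. exists (a', b'). simpl; auto.
    - exists (0,0). intro; lra. }
  set (g := fun k p => proj1_sig (constructive_indefinite_description _ (Hg k p))).
  assert (Hgs : forall k p, fst p < snd p -> fst p <= fst (g k p) /\ fst (g k p) < snd (g k p) /\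
      snd (g k p) <= snd p /\ forall z, fst (g k p) <= z <= snd (g k p) -> ~ N k z).
  { intros k p. unfold g. destruct (constructive_indefinite_description _ (Hg k p)). simpl. auto. }
  set (iv := fix iv (k : nat) : R * R := match k with O => (x - d/2, x + d/2) | S k => g k (iv k) end).
  assert (Hlt : forall k, fst (iv k) < snd (iv k)).
  { induction k; simpl. lra. destruct (Hgs k (iv k) IHk) as [_ [H _]]. exact H. }
  assert (Hmono : forall k m, fst (iv k) <= fst (iv (m + k)%nat) /\ snd (iv (m + k)%nat) <= snd (iv k)).
  { intros k m; induction m; simpl. lra.
    destruct (Hgs (m + k)%nat (iv (m + k)%nat) (Hlt _)) as [H1 [_ [H3 _]]]. lra. }
  set (E := fun y => exists k, y = fst (iv k)).
  assert (HE1 : bound E).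
  { exists (snd (iv 0%nat)). intros y [k ->]. destruct (Hmono 0%nat k) as [_ H].
    pose proof (Hlt (k+0)%nat). destruct (Hmono 0%nat k). replace (k+0)%nat with k in * by lia. lra. }
  assert (HE2 : exists y, E y) by (exists (fst (iv 0%nat)); exists 0%nat; auto).
  destruct (completeness E HE1 HE2) as [L [HL1 HL2]].
  assert (HL : forall k, fst (iv k) <= L <= snd (iv k)).
  { intro k. split. apply HL1. exists k; auto.
    apply HL2. intros y [j ->].
    destruct (Hmono j k) as [H1 _]. destruct (Hmono k j) as [_ H2].
    replace (j + k)%nat with (k + j)%nat in H2 by lia. pose proof (Hlt (k + j)%nat). lra. }
  exists L. split.
  - apply NNPP; intro HA. destruct (Hcov L HA) as [n Hn].
    destruct (Hgs n (iv n) (Hlt n)) as [_ [_ [_ H4]]]. apply (H4 L); [| exact Hn].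
    exact (HL (S n)).
  - apply abs_lt'. pose proof (HL 0%nat). simpl in H. lra.
Qed.

Lemma cont_unfold (f : R -> R) (x : R) : continuity_pt f x ->
  forall eps, 0 < eps -> exists alp, 0 < alp /\
    forall y, Rabs (y - x) < alp -> Rabs (f y - f x) < eps.
Proof.
  intros H eps He. destruct (H eps He) as [alp [Ha Hy]]. exists alp; split; [lra|].
  intros y Hyx. destruct (Req_dec y x) as [->|Hne].
  - replace (f x - f x) with 0 by ring. rewrite Rabs_R0. exact He.
  - apply (Hy y). split; [split; [exact I| auto] | exact Hyx].
Qed.

Lemma cont_fold (f : R -> R) (x : R) :
  (forall eps, 0 < eps -> exists alp, 0 < alp /\
    forall y, Rabs (y - x) < alp -> Rabs (f y - f x) < eps) -> continuity_pt f x.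
Proof.
  intros H eps He. destruct (H eps He) as [alp [Ha Hy]]. exists alp; split; [lra|].
  intros y [_ Hyx]. apply Hy. exact Hyx.
Qed.

Definition Nosc (f : R -> R) (n : nat) (x : R) : Prop :=
  forall d, 0 < d -> exists u v, Rabs (u - x) < d /\ Rabs (v - x) < d /\
    / INR (S n) <= Rabs (f u - f v).

Lemma cont_residual (f : R -> R) : cliquish f -> residual (fun x => continuity_pt f x).
Proof.
  intro hf. exists (Nosc f). split.
  - intros n x [e [He Hi]].
    assert (Hpos : 0 < / INR (S n)) by (apply Rinv_0_lt_compat, lt_0_INR; lia).
    destruct (hf (x - e/2) (x + e/2) ltac:(lra) (/ INR (S n)) Hpos) as [c [d [H1 [H2 [H3 [r [Hr Hosc]]]]]]].
    set (y := (c + d) / 2). set (rho := (d - c) / 2).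
    assert (Hc : closure (Nosc f n) y) by (apply Hi; apply abs_lt'; unfold y; lra).
    destruct (Hc (rho/2) ltac:(unfold rho; lra)) as [z [Hz Hzy]].
    destruct (Hz (rho/2) ltac:(unfold rho; lra)) as [u [v [Hu [Hv Huv]]]].
    apply abs_lt in Hzy, Hu, Hv.
    assert (Rabs (f u - f v) <= r) by (apply Hosc; unfold y, rho in *; lra). lra.
  - intros x Hx. apply NNPP; intro Hn. apply Hx. apply cont_fold. intros eps He.
    destruct (archimed_cor1 eps He) as [M [HM HM0]].
    destruct M as [|n]; [lia|].
    assert (Hnn : ~ Nosc f n x) by (intro; apply Hn; exists n; auto).
    unfold Nosc in Hnn. apply not_all_ex_not in Hnn as [d Hd].
    apply imply_to_and in Hd as [Hd Hd2].
    exists d; split; [exact Hd|]. intros y Hy.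
    apply NNPP; intro Hc. apply Hd2. exists y, x. split; [exact Hy|]. split.
    + replace (x - x) with 0 by ring. rewrite Rabs_R0. exact Hd.
    + lra.
Qed.

Theorem mainTheorem3 (f : R -> R) (hf : cliquish f) :
  swiatkowski f <->
  (forall A : R -> Prop, residual A -> S_cond f (fun _ => True) A 0).
Proof.
  split.
  - intros Hs A HA a b _ _ Hfab.
    assert (exists x, Rmin a b < x < Rmax a b /\ continuity_pt f x /\ f a < f x < f b)
      as [x [Hx [Hc Hfx]]].
    { destruct (Rtotal_order a b) as [Hab|[Hab|Hab]].
      - destruct (Hs a b Hab ltac:(lra)) as [x [Hx [Hc Hfx]]]. exists x.
        unfold Rmin, Rmax in *. destruct (Rle_dec a b), (Rle_dec (f a) (f b)); try lra.
        repeat split; auto; lra.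
      - subst; lra.
      - destruct (Hs b a Hab ltac:(lra)) as [x [Hx [Hc Hfx]]]. exists x.
        unfold Rmin, Rmax in *. destruct (Rle_dec a b), (Rle_dec (f b) (f a)); try lra.
        repeat split; auto; lra. }
    destruct (cont_unfold f x Hc (Rmin (f x - f a) (f b - f x))) as [alp [Ha Hy]].
    { apply Rmin_case; lra. }
    set (d := Rmin alp (Rmin (x - Rmin a b) (Rmax a b - x))).
    assert (Hd : 0 < d) by (unfold d; apply Rmin_case; [lra|]; apply Rmin_case; lra).
    assert (Hd1 : d <= alp) by apply Rmin_l.
    assert (Hd2 : d <= x - Rmin a b) by (unfold d; pose proof (Rmin_r alp (Rmin (x - Rmin a b) (Rmax a b - x))); pose proof (Rmin_l (x - Rmin a b) (Rmax a b - x)); lra).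
    assert (Hd3 : d <= Rmax a b - x) by (unfold d; pose proof (Rmin_r alp (Rmin (x - Rmin a b) (Rmax a b - x))); pose proof (Rmin_r (x - Rmin a b) (Rmax a b - x)); lra).
    destruct (baire A HA x d Hd) as [y [HAy Hyx]].
    exists y. split; [exact HAy|].
    pose proof (Hy y ltac:(lra)) as Hfy. apply abs_lt in Hfy, Hyx.
    pose proof (Rmin_l (f x - f a) (f b - f x)). pose proof (Rmin_r (f x - f a) (f b - f x)).
    split; [unfold Iab; lra | lra].
  - intros HS a b Hab Hne.
    pose proof (HS _ (cont_residual f hf)) as H.
    destruct (Rlt_or_le (f a) (f b)) as [Hf|Hf].
    + destruct (H a b I I Hf) as [x [Hc [Hx Hfx]]]. exists x.
      unfold Iab, Rmin, Rmax in *. destruct (Rle_dec a b), (Rle_dec (f a) (f b)); try lra.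
      repeat split; auto; lra.
    + destruct (H b a I I ltac:(lra)) as [x [Hc [Hx Hfx]]]. exists x.
      unfold Iab, Rmin, Rmax in *. destruct (Rle_dec a b), (Rle_dec (f a) (f b)), (Rle_dec b a); try lra.
      repeat split; auto; lra.
Qed.
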